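(* Let $E$ be a Banach lattice. A bounded set $A \subset E$ is almost limited if and only if $T(A)$ is relatively compact in $c_0$ for every disjoint operator $T: E \to c_0$.
   Context: A bounded subset $A$ of a Banach lattice $E$ is almost limited if every disjoint weak* null sequence $(x_n')$ in the dual Banach lattice $E'$ converges uniformly to zero on $A$, i.e. $\sup_{x \in A}|x_n'(x)| \to 0$. Every bounded linear operator $T: E \to c_0$ has the form $T(x) = (x_n'(x))_n$ for a unique weak* null sequence $(x_n') \subset E'$; $T$ is a disjoint operator if $(x_n')$ is disjoint in $E'$. *)

(* Defs.v *)
From HB Require Import structures.
From mathcomp Require Import all_boot all_order all_algebra.
From mathcomp Require Import all_classical all_reals all_analysis.
Set Implicit Arguments. Unset Strict Implicit. Unset Printing Implicit Defensive.
Import Order.TTheory GRing.Theory Num.Theory.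
Import numFieldNormedType.Exports.
Local Open Scope classical_set_scope.
Local Open Scope ring_scope.

Section BanachLattice.
Variables (R : realType) (E : completeNormedModType R) (le : E -> E -> Prop).

Definition is_sup2 (x y s : E) : Prop :=
  [/\ le x s, le y s & forall u, le x u -> le y u -> le s u].

Definition is_modulus (x a : E) : Prop := is_sup2 x (- x) a.

Definition banach_lattice : Prop :=
  (forall x, le x x) /\
  (forall x y, le x y -> le y x -> x = y) /\
  (forall x y z, le x y -> le y z -> le x z) /\
  (forall x y z, le x y -> le (x + z) (y + z)) /\
  (forall (a : R) x y, 0 <= a -> le x y -> le (a *: x) (a *: y)) /\
  (forall x y, exists s, is_sup2 x y s) /\
  (forall x y ax ay, is_modulus x ax -> is_modulus y ay -> le ax ay ->
     `|x| <= `|y|).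

Definition dual_elem (f : E -> R) : Prop :=
  (forall (a : R) x y, f (a *: x + y) = a * f x + f y) /\ continuous f.

Definition dual_modulus (f : E -> R) (x : E) : R :=
  sup [set `|f u| | u in [set u | exists au, is_modulus u au /\ le au x]].

(** Disjointness in E': |f| /\ |g| = 0, where the infimum in E' is given by
   the Riesz-Kantorovich formula
   (|f| /\ |g|)(x) = inf { |f|(y) + |g|(x - y) : 0 <= y <= x }, x >= 0. *)
Definition dual_disjoint (f g : E -> R) : Prop :=
  forall x, le 0 x ->
    inf [set dual_modulus f y + dual_modulus g (x - y)
        | y in [set y | le 0 y /\ le y x]] = 0.

Definition disjoint_seq (xs : nat -> E -> R) : Prop :=
  forall n m, n <> m -> dual_disjoint (xs n) (xs m).

Definition weakstar_null (xs : nat -> E -> R) : Prop :=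
  forall x, (fun n => xs n x) @ \oo --> (0 : R).

Definition almost_limited (A : set E) : Prop :=
  bounded_set A /\
  forall xs : nat -> E -> R, (forall n, dual_elem (xs n)) ->
    disjoint_seq xs -> weakstar_null xs ->
    (fun n => sup [set `|xs n x| | x in A]) @ \oo --> (0 : R).

(** The operator T : E -> c0 associated with the weak* null sequence (x'_n):
   T x = (x'_n(x))_n.  Its values are viewed in the space of real sequences
   with the topology of uniform convergence (= sup-norm topology), in which
   c0 is a closed subspace. *)
Definition op_of_seq (xs : nat -> E -> R) (x : E) : {uniform nat -> R} :=
  fun n => xs n x.

End BanachLattice.

(* Main.v *)
Require Import Defs.
From HB Require Import structures.
From mathcomp Require Import all_boot all_order all_algebra.
From mathcomp Require Import all_classical all_reals all_analysis.
From mathcomp Require Import ring lra.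
Import Order.TTheory GRing.Theory Num.Theory.
Import numFieldNormedType.Exports.
Local Open Scope classical_set_scope.
Local Open Scope ring_scope.
Lemma dual_bound (R : realType) (E : completeNormedModType R) (f : E -> R) (A : set E) :
  dual_elem f -> bounded_set A -> exists C, forall x, A x -> `|f x| <= C.
Proof.
move=> [lin cf] bA.
have f0 : f 0 = 0.
  have := lin 1 0 0; rewrite scale1r addr0 mul1r => h.
  by apply: (addrI (f 0)); rewrite addr0 -h.
have fZ a x : f (a *: x) = a * f x by rewrite -[a *: x]addr0 lin f0 addr0.
have /cvgrPdist_lt/(_ 1 ltr01) := cf 0.
rewrite f0 => /nbhs_norm0P [d /= d0 Hd].
move: bA => [M [Mreal]] /(_ (`|M| + 1)).
rewrite (le_lt_trans (ler_norm _)) ?ltrDl// => /(_ erefl) HM.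
exists (2 * (`|M| + 1) / d) => x Ax.
have M1 : 0 < `|M| + 1 by rewrite ltr_wpDl.
have hx : `|(d / (2 * (`|M| + 1))) *: x| < d.
  rewrite normrZ ger0_norm; last by rewrite divr_ge0 // ?ltW // mulr_gt0.
  rewrite -ltr_pdivlMl ?divr_gt0 ?mulr_gt0 //.
  rewrite invf_div divfK ?gt_eqF //.
  apply: (le_lt_trans (HM x Ax)).
  by rewrite ltr_pMl // ltr1n.
have := Hd _ hx; rewrite /= sub0r normrN fZ normrM ger0_norm; last by rewrite divr_ge0 // ?ltW // mulr_gt0.
by rewrite -ltr_pdivlMl ?divr_gt0 ?mulr_gt0 // invf_div mulr1 => /ltW.
Qed.

Lemma ballR (R : realType) (x y e : R) : ball x e y <-> `|x - y| < e.
Proof. by rewrite -ball_normE. Qed.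

Lemma ptws_nbhs_fin (R : realType) (g : {ptws nat -> R}) (e : R) (N : nat) :
  0 < e -> nbhs g [set h : {ptws nat -> R} | forall n, (n < N)%N -> ball (g n) e (h n)].
Proof.
move=> e0; elim: N => [|N IH].
  by apply: filterS (@filterT _ _ _) => h _ n.
have hN : nbhs g [set h : {ptws nat -> R} | ball (g N) e (h N)].
  have := @proj_continuous nat (fun _ => R) N g.
  by move/(_ _ (nbhsx_ballx (g N) e e0)).
apply: filterS (filterI IH hN) => h [h1 h2] n.
rewrite ltnS leq_eqVlt => /orP [/eqP -> //|]; exact: h1.
Qed.

Lemma unif_ptws (R : realType) (b : nat -> R) (g : nat -> R) (B : set (nat -> R)) :
  b @ \oo --> 0 -> (forall n, `|g n| <= b n) ->
  nbhs (g : {uniform nat -> R}) B ->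
  exists2 B' : set (nat -> R), nbhs (g : {ptws nat -> R}) B' &
    forall h, (forall n, `|h n| <= b n) -> B' h -> B h.
Proof.
move=> bcvg Kg /uniform_nbhs [E [entE EB]].
move: entE; rewrite -entourage_ballE => -[e /= e0 eE].
have /cvgr0_norm_lt /(_ (e / 2)) := bcvg.
rewrite divr_gt0 // => /(_ isT) [N _ HN].
exists [set h : nat -> R | forall n, (n < N)%N -> ball (g n) e (h n)].
  exact: (@ptws_nbhs_fin R g e N e0).
move=> h Kh Bh; apply: EB => y _; apply: eE => /=.
case: (ltnP y N) => [/Bh //|Ny].
apply/ballR; have := HN y Ny => /= by2.
have b0 : 0 <= b y by apply: le_trans (Kg y).
rewrite ger0_norm // in by2.
apply: (le_lt_trans (ler_normB _ _)).
apply: (le_lt_trans (lerD (Kg y) (Kh y))).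
by rewrite [X in _ < X](splitr e) ltrD.
Qed.

Lemma K_compact (R : realType) (b : nat -> R) :
  b @ \oo --> 0 ->
  compact [set g : {uniform nat -> R} | forall n, `|g n| <= b n].
Proof.
move=> bcvg F FF FK.
have cK : compact [set g : {ptws nat -> R} | forall n, `|g n| <= b n].
  have := @tychonoff nat (fun _ => R) (fun n => `[- b n, b n]%classic)
    (fun n => @segment_compact R (- b n) (b n)).
  congr compact; apply/seteqP; split=> g /= H n.
    by move: (H n); rewrite /= in_itv /= ler_norml.
  by rewrite /= in_itv /= -ler_norml.
have [g [Kg clg]] := cK F FF FK.
exists g; split => // P Q FP /(@unif_ptws R b g Q bcvg Kg) [B' B'g B'Q].
have [h [[Ph Kh] B'h]] := clg _ _ (filterI FP FK) B'g.
by exists h; split => //; apply: B'Q.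
Qed.

Lemma K_closed (R : realType) (b : nat -> R) :
  closed [set g : {uniform nat -> R} | forall n, `|g n| <= b n].
Proof.
move=> g clg n; apply/ler_addgt0Pr => e e0.
have := clg [set h : {uniform nat -> R} | forall y, ball (g y) e (h y)].
case.
  apply/uniform_nbhs; exists [set xy | ball xy.1 e xy.2]; split.
    exact: (entourage_ball _ (PosNum e0)).
  by move=> h H y; exact: H.
move=> h [Kh /(_ n) /ballR ghn].
rewrite -[g n](subrK (h n)) addrC.
by apply: le_trans (ler_normD _ _) _; apply: lerD (Kh n) (ltW ghn).
Qed.

Lemma tight_precompact (R : realType) (T : Type) (A : set T)
    (u : T -> {uniform nat -> R}) (b : nat -> R) :
  (forall n x, A x -> `|u x n| <= b n) -> b @ \oo --> 0 ->
  precompact [set u x | x in A].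
Proof.
move=> ub bcvg; rewrite precompactE.
apply: (@subclosed_compact _ _ [set g : {uniform nat -> R} | forall n, `|g n| <= b n]).
- exact: closed_closure.
- exact: (@K_compact R b bcvg).
apply: (subset_trans (closure_subset _)) ; last exact: (@K_closed R b).
by move=> _ [x Ax <-] n; apply: ub.
Qed.

Lemma near_seq (T : eqType) (P : T -> nat -> Prop) (s : seq T) :
  (forall c, c \in s -> \forall n \near \oo, P c n) ->
  \forall n \near \oo, forall c, c \in s -> P c n.
Proof.
elim: s => [_|a s IH H].
  by apply: filterS (@filterT _ _ _) => n _ c.
have Ha := H a (mem_head a s).
have Hs : \forall n \near \oo, forall c, c \in s -> P c n.
  by apply: IH => c cs; apply: H; rewrite inE cs orbT.
apply: filterS (filterI Ha Hs) => n [Pa Ps] c.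
by rewrite inE => /orP [/eqP -> //|]; exact: Ps.
Qed.

Lemma precompact_tight (R : realType) (T : Type) (A : set T)
    (u : T -> {uniform nat -> R}) :
  (forall x, A x -> (fun n => u x n) @ \oo --> (0:R)) ->
  precompact [set u x | x in A] ->
  (fun n => sup [set `|u x n| | x in A]) @ \oo --> (0 : R).
Proof.
move=> u0; rewrite precompactE => /compact_near_coveringP cov.
apply/cvgrPdist_lt => eps eps0.
pose e := eps / 4.
have e0 : 0 < e by rewrite divr_gt0.
have H : forall p : {uniform nat -> R}, closure [set u x | x in A] p ->
    \forall x' \near p & i \near \oo, `|x' i| < e + e + e.
  move=> p clp.
  have := clp [set h : {uniform nat -> R} | forall y, ball (p y) e (h y)].
  case.
    apply/uniform_nbhs; exists [set xy | ball xy.1 e xy.2]; split.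
      exact: (entourage_ball _ (PosNum e0)).
    by move=> h H y; exact: H.
  move=> _ [[x Ax <-] Hx].
  have [N _ HN] := cvgr0_norm_lt _ (u0 x Ax) _ e0.
  exists ([set h : {uniform nat -> R} | forall y, ball (p y) e (h y)],
          [set n | (N <= n)%N]); first split => /=.
  - apply/uniform_nbhs; exists [set xy | ball xy.1 e xy.2]; split.
      exact: (entourage_ball _ (PosNum e0)).
    by move=> h H y; exact: H.
  - by exists N.
  case=> h n /= [Hh Nn].
  have /ballR h1 := Hh n; have /ballR h2 := Hx n; have h3 := HN n Nn.
  have -> : h n = (h n - p n) + (p n - u x n) + u x n by ring.
  apply: le_lt_trans (ler_normD _ _) _; rewrite ltrD //.
  apply: le_lt_trans (ler_normD _ _) _; rewrite ltrD //.
  by rewrite distrC.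
have [N _ HN] := cov nat \oo (fun n (h : {uniform nat -> R}) => `|h n| < e + e + e) _ H.
exists N => // n /HN Hn.
have ub z : A z -> `|u z n| < e + e + e.
  by move=> Az; apply: Hn; apply: subset_closure; exists z.
case: (pselect (A !=set0)) => [[z0 Az0]|A0].
  have ubS : ubound [set `|u x n| | x in A] (e + e + e).
    by move=> _ [z Az <-]; apply: ltW; apply: ub.
  have suple := ge_sup (ex_intro _ _ (ex_intro2 _ _ z0 Az0 erefl)) ubS.
  have sup0 : 0 <= sup [set `|u x n| | x in A].
    apply: le_trans (normr_ge0 (u z0 n)) _.
    by apply: (ub_le_sup (ex_intro _ _ ubS)); exists z0.
  rewrite sub0r normrN ger0_norm //.
  apply: le_lt_trans suple _; rewrite /e; lra.
have -> : [set `|u x n| | x in A] = set0.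
  apply/seteqP; split => // t [z Az _]; apply: A0; by exists z.
by rewrite sup0 subr0 normr0.
Qed.

Theorem mainTheorem6 (R : realType) (E : completeNormedModType R)
    (le : E -> E -> Prop) (HE : banach_lattice le) (A : set E) :
  bounded_set A ->
  (almost_limited le A <->
   forall xs : nat -> E -> R,
     (forall n, dual_elem (xs n)) -> weakstar_null xs -> disjoint_seq le xs ->
     precompact [set op_of_seq xs x | x in A]).
Proof.
move=> bA; split.
  move=> [_ AL] xs dxs wxs disj.
  apply: (@tight_precompact R E A (op_of_seq xs)
            (fun n => sup [set `|xs n x| | x in A])); last exact: AL.
  move=> n x Ax.
  have [C HC] := @dual_bound R E (xs n) A (dxs n) bA.
  have hub : has_ubound [set `|xs n x| | x in A].
    by exists C => _ [y Ay <-]; apply: HC.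
  by apply: (ub_le_sup hub); exists x.
move=> H; split => // xs dxs disj wxs.
apply: (@precompact_tight R E A (op_of_seq xs)); last exact: H.
by move=> x _; apply: wxs.
Qed.
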